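(* Let $(\Psi_d)_d$ be a constraint structure that is both a meet and a lift constraint structure, let $(\le,\wedge,P)$ be a decent triple on it, and let $(R^d)_d$ be a constraint-refining predicate that relates to a constraint-producing predicate $(\models^d)_d$. If $\vdash^{d}\Gamma\to\sigma'$ is derivable in DI, then for every $\sigma\in\Psi_d$ such that $P(\sigma\wedge\sigma')$ and for every sequentialisation $r$, there exists $\sigma''\in\Psi_d$ such that $\sigma''\simeq\sigma\wedge\sigma'$ and $\sigma\to\vdash^{d}\Gamma\to\sigma''$ is derivable in SDI with a proof tree that follows $r$.
   Context: Formulas are first-order formulas in negation normal form, built from literals using $\wedge,\vee,\forall,\exists$. Eigenvariables (written $\bar x$) and meta-variables (written $X$) are two disjoint infinite supplies of variables. Domains: there is an initial domain $d_0$; for a domain $d$ and an eigenvariable $\bar x$ (resp. meta-variable $X$) not declared in $d$, $d;\bar x$ (resp. $d;X$) is a domain declaring additionally $\bar x$ (resp. $X$); all domains arise this way. A formula of domain $d$ is one whose free variables are eigenvariables or meta-variables declared in $d$; a context of domain $d$ is a finite multiset of formulas of domain $d$; $\Gamma_{lit}$ is the set of literals that are elements of $\Gamma$. A constraint structure consists of a set $\Psi_d$ for each domain $d$, with $\Psi_{d;\bar x}=\Psi_d$, and projection maps $\Psi_{d;X}\to\Psi_d$, $\sigma\mapsto\sigma_\downarrow$; a meet constraint structure additionally has a binary operation $\wedge$ on each $\Psi_d$; a lift constraint structure additionally has maps $\Psi_d\to\Psi_{d;X}$, $\sigma\mapsto\sigma^\uparrow$. A triple $(\le,\wedge,P)$,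 where $\le$ is a family of preorders on the $\Psi_d$, $\wedge$ the meet operations, and $P$ a family of predicates on the $\Psi_d$, is decent if, writing $\simeq$ for the equivalence relation generated by $\le$: (D1) for all $\sigma,\sigma'\in\Psi_d$, $\sigma\wedge\sigma'$ is a greatest lower bound of $\sigma,\sigma'$ for $\le$; (D2) for all $\sigma\in\Psi_d$ and $\sigma',\sigma''\in\Psi_{d;X}$, $\sigma''\simeq\sigma^\uparrow\wedge\sigma'$ implies $\sigma''_\downarrow\simeq\sigma\wedge\sigma'_\downarrow$; (P1) for all $\sigma\in\Psi_{d;X}$, $P(\sigma)\iff P(\sigma_\downarrow)$; (P2) for all $\sigma,\sigma'\in\Psi_d$, $P(\sigma)$ and $\sigma\le\sigma'$ imply $P(\sigma')$. A constraint-producing predicate is a family of relations $\mathcal A\models^d\sigma$ between sets $\mathcal A$ of literals of domain $d$ and $\sigma\in\Psi_d$. A constraint-refining predicate is a family of relations $R^d(\sigma,\mathcal A,\sigma')$ between sets $\mathcal A$ of literals of domain $d$ and pairs $\sigma,\sigma'\in\Psi_d$. It relates to $(\models^d)_d$ if for all $d$, all sets $\mathcal A$ of literals of domain $d$ and all $\sigma\in\Psi_d$: (A1) for all $\sigma'\in\Psi_d$, $R^d(\sigma,\mathcal A,\sigma')$ implies there is $\sigma''\in\Psi_d$ with $\sigma'\simeq\sigma\wedge\sigma''$, $P(\sigma\wedge\sigma'')$ and $\mathcal A\models^d\sigma''$; (A2) for all $\sigma'\in\Psi_d$, if $P(\sigma\wedge\sigma')$ and $\mathcal A\models^d\sigma'$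 then there is $\sigma''\in\Psi_d$ with $\sigma''\simeq\sigma\wedge\sigma'$ and $R^d(\sigma,\mathcal A,\sigma'')$. System DI derives $\vdash^d\Gamma\to\sigma$ ($\Gamma$, $\sigma$ of domain $d$) by: $\vdash^d\Gamma\to\sigma$ if $\Gamma_{lit}\models^d\sigma$; from $\vdash^d\Gamma,A\to\sigma$ and $\vdash^d\Gamma,B\to\sigma'$ infer $\vdash^d\Gamma,A\wedge B\to\sigma\wedge\sigma'$; from $\vdash^d\Gamma,A,B\to\sigma$ infer $\vdash^d\Gamma,A\vee B\to\sigma$; from $\vdash^{d;X}\Gamma,A[x:=X],\exists xA\to\sigma$ ($X$ fresh meta-variable) infer $\vdash^d\Gamma,\exists xA\to\sigma_\downarrow$; from $\vdash^{d;\bar x}\Gamma,A[x:=\bar x]\to\sigma$ ($\bar x$ fresh eigenvariable) infer $\vdash^d\Gamma,\forall xA\to\sigma$. System SDI derives $\sigma\to\vdash^d\Gamma\to\sigma'$ ($\Gamma,\sigma,\sigma'$ of domain $d$) by: $\sigma\to\vdash^d\Gamma\to\sigma'$ if $R^d(\sigma,\Gamma_{lit},\sigma')$; from $\sigma\to\vdash^d\Gamma,A,B\to\sigma'$ infer $\sigma\to\vdash^d\Gamma,A\vee B\to\sigma'$; for $i\in\{0,1\}$, from $\sigma\to\vdash^d\Gamma,A_i\to\sigma''$ and $\sigma''\to\vdash^d\Gamma,A_{1-i}\to\sigma'$ infer $\sigma\to\vdash^d\Gamma,A_0\wedge A_1\to\sigma'$; from $\sigma^\uparrow\to\vdash^{d;X}\Gamma,A[x:=X],\exists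 xA\to\sigma'$ ($X$ fresh meta-variable) infer $\sigma\to\vdash^d\Gamma,\exists xA\to\sigma'_\downarrow$; from $\sigma\to\vdash^{d;\bar x}\Gamma,A[x:=\bar x]\to\sigma'$ ($\bar x$ fresh eigenvariable) infer $\sigma\to\vdash^d\Gamma,\forall xA\to\sigma'$. A sequentialisation is an infinite binary tree whose nodes are each labelled ''black'' or ''white''. An SDI proof tree $\pi$ follows a sequentialisation $r$, defined by induction on $\pi$: if the last rule has no premiss, $\pi$ follows $r$; if it has one premiss, $\pi$ follows $r$ iff its immediate subtree does; if the last rule is the $\wedge$ rule with index $i$, first premiss subtree $\pi_i$ (for $A_i$) and second premiss subtree $\pi_{1-i}$ (for $A_{1-i}$), then $\pi$ follows $r$ iff $\pi_i$ follows the left immediate subtree of $r$, $\pi_{1-i}$ follows the right immediate subtree of $r$, and either $i=0$ and the root of $r$ is white, or $i=1$ and the root of $r$ is black. *)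

(* Defs.v *)
From Stdlib Require Import List Permutation.
Import ListNotations.

Inductive decl : Type := DEig (n : nat) | DMeta (n : nat).

(* A domain is the list of its declarations, most recent first; the initial
   domain d0 is [] (declares nothing).  d;\bar x = DEig x :: d, d;X = DMeta X :: d. *)
Definition domain := list decl.

(* All domains arise from d0 by fresh extensions: no variable declared twice. *)
Definition dom_wf (d : domain) : Prop := NoDup d.

(* The constraint sets satisfy Psi_{d;\bar x} = Psi_d.  We realise this
   definitionally: a constraint family is indexed by domains, and Psi_d is
   the value at [key d], which strips the most recent eigenvariable declarations. *)
Fixpoint key (d : domain) : domain :=
  match d with
  | [] => []
  | DEig _ :: d' => key d'
  | DMeta X :: d' => DMeta X :: d'
  end.

Inductive term : Type :=
| TBound (n : nat)              (* bound variable, de Bruijn index *)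
| TEig (n : nat)
| TMeta (n : nat)
| TApp (f : nat) (ts : terms)
with terms : Type :=
| TNil
| TCons (t : term) (ts : terms).

Inductive lit : Type :=
| LPos (p : nat) (ts : terms)
| LNeg (p : nat) (ts : terms).

(* Formulas in negation normal form. *)
Inductive formula : Type :=
| FLit (l : lit)
| FAnd (A B : formula)
| FOr (A B : formula)
| FAll (A : formula)
| FEx (A : formula).

Fixpoint topen (k : nat) (u : term) (t : term) : term :=
  match t with
  | TBound n => if Nat.eqb n k then u else TBound n
  | TEig x => TEig x
  | TMeta X => TMeta X
  | TApp f ts => TApp f (tsopen k u ts)
  end
with tsopen (k : nat) (u : term) (ts : terms) : terms :=
  match ts with
  | TNil => TNil
  | TCons t ts' => TCons (topen k u t) (tsopen k u ts')
  end.

Definition lopen (k : nat) (u : term) (l : lit) : lit :=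
  match l with
  | LPos p ts => LPos p (tsopen k u ts)
  | LNeg p ts => LNeg p (tsopen k u ts)
  end.

Fixpoint fopen (k : nat) (u : term) (A : formula) : formula :=
  match A with
  | FLit l => FLit (lopen k u l)
  | FAnd A B => FAnd (fopen k u A) (fopen k u B)
  | FOr A B => FOr (fopen k u A) (fopen k u B)
  | FAll A => FAll (fopen (S k) u A)
  | FEx A => FEx (fopen (S k) u A)
  end.

Definition subst0 (A : formula) (t : term) : formula := fopen 0 t A.

Fixpoint term_of (d : domain) (k : nat) (t : term) : Prop :=
  match t with
  | TBound n => n < k
  | TEig x => In (DEig x) d
  | TMeta X => In (DMeta X) d
  | TApp _ ts => terms_of d k ts
  end
with terms_of (d : domain) (k : nat) (ts : terms) : Prop :=
  match ts with
  | TNil => True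
  | TCons t ts' => term_of d k t /\ terms_of d k ts'
  end.

Definition lit_of_at (d : domain) (k : nat) (l : lit) : Prop :=
  match l with
  | LPos _ ts => terms_of d k ts
  | LNeg _ ts => terms_of d k ts
  end.

Fixpoint formula_of_at (d : domain) (k : nat) (A : formula) : Prop :=
  match A with
  | FLit l => lit_of_at d k l
  | FAnd A B => formula_of_at d k A /\ formula_of_at d k B
  | FOr A B => formula_of_at d k A /\ formula_of_at d k B
  | FAll A => formula_of_at d (S k) A
  | FEx A => formula_of_at d (S k) A
  end.

Definition lit_of (d : domain) (l : lit) : Prop := lit_of_at d 0 l.
Definition formula_of (d : domain) (A : formula) : Prop := formula_of_at d 0 A.

(* contexts: finite multisets of formulas, represented by lists up to Permutation *)
Definition ctx_of (d : domain) (G : list formula) : Prop :=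
  forall A, In A G -> formula_of d A.

Definition lits (G : list formula) : lit -> Prop := fun l => In (FLit l) G.

Record cstruct : Type := {
  Psi : domain -> Type;
  proj : forall (d : domain) (X : nat), Psi (DMeta X :: d) -> Psi (key d);
  cmeet : forall (k : domain), Psi k -> Psi k -> Psi k;
  lift : forall (d : domain) (X : nat), Psi (key d) -> Psi (DMeta X :: d)
}.

Arguments proj c {d X} _.
Arguments cmeet c {k} _ _.
Arguments lift c {d X} _.

Section Constraints.
Variable C : cstruct.
Variable le : forall k : domain, Psi C k -> Psi C k -> Prop.
Variable P : forall k : domain, Psi C k -> Prop.

Definition ceq (k : domain) (a b : Psi C k) : Prop := le k a b /\ le k b a.

Definition preorder_family : Prop :=
  forall d, dom_wf d ->
    (forall a : Psi C (key d), le (key d) a a) /\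
    (forall a b c : Psi C (key d), le (key d) a b -> le (key d) b c -> le (key d) a c).

Definition is_glb (k : domain) (m a b : Psi C k) : Prop :=
  le k m a /\ le k m b /\ (forall c, le k c a -> le k c b -> le k c m).

Definition decent : Prop :=
  (* D1 *)
  (forall d, dom_wf d -> forall s s' : Psi C (key d),
      is_glb (key d) (cmeet C s s') s s') /\
  (* D2 *)
  (forall d X, dom_wf d -> ~ In (DMeta X) d ->
     forall (s : Psi C (key d)) (s' s'' : Psi C (DMeta X :: d)),
       ceq (DMeta X :: d) s'' (cmeet C (lift C s) s') ->
       ceq (key d) (proj C s'') (cmeet C s (proj C s'))) /\
  (* P1 *)
  (forall d X, dom_wf d -> ~ In (DMeta X) d ->
     forall s : Psi C (DMeta X :: d),
       P (DMeta X :: d) s <-> P (key d) (proj C s)) /\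
  (* P2 *)
  (forall d, dom_wf d -> forall s s' : Psi C (key d),
      P (key d) s -> le (key d) s s' -> P (key d) s').

Variable models : forall d : domain, (lit -> Prop) -> Psi C (key d) -> Prop.
Variable R : forall d : domain, Psi C (key d) -> (lit -> Prop) -> Psi C (key d) -> Prop.

Definition relates : Prop :=
  forall d, dom_wf d ->
  forall (A : lit -> Prop), (forall l, A l -> lit_of d l) ->
  forall s : Psi C (key d),
    (forall s', R d s A s' ->
       exists s'', ceq (key d) s' (cmeet C s s'') /\ P (key d) (cmeet C s s'')
                   /\ models d A s'') /\
    (forall s', P (key d) (cmeet C s s') -> models d A s' ->
       exists s'', ceq (key d) s'' (cmeet C s s') /\ R d s A s'').

Inductive DI : forall d : domain, list formula -> Psi C (key d) -> Prop :=
| DI_ax d G s :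
    dom_wf d -> ctx_of d G -> models d (lits G) s -> DI d G s
| DI_and d G G' A B s s' :
    ctx_of d G' -> Permutation G' (FAnd A B :: G) ->
    DI d (A :: G) s -> DI d (B :: G) s' -> DI d G' (cmeet C s s')
| DI_or d G G' A B s :
    ctx_of d G' -> Permutation G' (FOr A B :: G) ->
    DI d (A :: B :: G) s -> DI d G' s
| DI_ex d G G' A X s :
    ctx_of d G' -> ~ In (DMeta X) d -> Permutation G' (FEx A :: G) ->
    DI (DMeta X :: d) (subst0 A (TMeta X) :: FEx A :: G) s ->
    DI d G' (proj C s)
| DI_all d G G' A x (s : Psi C (key d)) :
    ctx_of d G' -> ~ In (DEig x) d -> Permutation G' (FAll A :: G) ->
    DI (DEig x :: d) (subst0 A (TEig x) :: G) s ->
    DI d G' s.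

Inductive SDI : forall d : domain, Psi C (key d) -> list formula -> Psi C (key d) -> Type :=
| SDI_ax d s G s' :
    dom_wf d -> ctx_of d G -> R d s (lits G) s' -> SDI d s G s'
| SDI_or d s G G' A B s' :
    ctx_of d G' -> Permutation G' (FOr A B :: G) ->
    SDI d s (A :: B :: G) s' -> SDI d s G' s'
| SDI_and d s G G' A0 A1 (i : bool) s'' s' :
    (* i = false : index 0, premises for A0 then A1; i = true : index 1, A1 then A0 *)
    ctx_of d G' -> Permutation G' (FAnd A0 A1 :: G) ->
    SDI d s ((if i then A1 else A0) :: G) s'' ->
    SDI d s'' ((if i then A0 else A1) :: G) s' ->
    SDI d s G' s'
| SDI_ex d s G G' A X s' :
    ctx_of d G' -> ~ In (DMeta X) d -> Permutation G' (FEx A :: G) ->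
    SDI (DMeta X :: d) (lift C s) (subst0 A (TMeta X) :: FEx A :: G) s' ->
    SDI d s G' (proj C s')
| SDI_all d (s : Psi C (key d)) G G' A x (s' : Psi C (key d)) :
    ctx_of d G' -> ~ In (DEig x) d -> Permutation G' (FAll A :: G) ->
    SDI (DEig x :: d) s (subst0 A (TEig x) :: G) s' ->
    SDI d s G' s'.

End Constraints.

Inductive color : Type := Black | White.

(* An infinite binary tree with coloured nodes: the colour of the node reached
   from the root by a path (false = go left, true = go right). *)
Definition seqz : Type := list bool -> color.
Definition seqz_root (r : seqz) : color := r [].
Definition seqz_left (r : seqz) : seqz := fun p => r (false :: p).
Definition seqz_right (r : seqz) : seqz := fun p => r (true :: p).

Fixpoint follows (C : cstruct)
  (R : forall d : domain, Psi C (key d) -> (lit -> Prop) -> Psi C (key d) -> Prop)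
  (d : domain) (s : Psi C (key d)) (G : list formula) (s' : Psi C (key d))
  (pi : SDI C R d s G s') (r : seqz) {struct pi} : Prop :=
  match pi with
  | SDI_ax _ _ _ _ _ _ _ _ _ => True
  | SDI_or _ _ _ _ _ _ _ _ _ _ _ p => follows C R _ _ _ _ p r
  | SDI_and _ _ _ _ _ _ _ _ i _ _ _ _ p1 p2 =>
      follows C R _ _ _ _ p1 (seqz_left r) /\ follows C R _ _ _ _ p2 (seqz_right r) /\
      ((i = false /\ seqz_root r = White) \/ (i = true /\ seqz_root r = Black))
  | SDI_ex _ _ _ _ _ _ _ _ _ _ _ _ p => follows C R _ _ _ _ p r
  | SDI_all _ _ _ _ _ _ _ _ _ _ _ _ p => follows C R _ _ _ _ p r
  end.

Arguments follows {C R d s G s'} pi r.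

(* Main.v *)
Require Import Defs.
From Stdlib Require Import List Permutation.

Section Glb.
Variable T : Type.
Variable le : T -> T -> Prop.
Variable m : T -> T -> T.
Hypothesis refl : forall a, le a a.
Hypothesis trans : forall a b c, le a b -> le b c -> le a c.
Hypothesis glb : forall a b, le (m a b) a /\ le (m a b) b /\ (forall c, le c a -> le c b -> le c (m a b)).

Lemma ml a b : le (m a b) a. Proof. apply glb. Qed.
Lemma mr a b : le (m a b) b. Proof. apply glb. Qed.
Lemma mg a b c : le c a -> le c b -> le c (m a b). Proof. apply glb. Qed.

Lemma s_le_1 s s1 s2 : le (m s (m s1 s2)) (m s s1).
Proof. apply mg. apply ml. eapply trans. apply mr. apply ml. Qed.
Lemma s_le_2 s s1 s2 : le (m s (m s1 s2)) (m s s2).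
Proof. apply mg. apply ml. eapply trans. apply mr. apply mr. Qed.

Lemma step_w s s1 s2 t1 : le t1 (m s s1) /\ le (m s s1) t1 ->
  le (m s (m s1 s2)) (m t1 s2) /\
  (forall t2, le t2 (m t1 s2) /\ le (m t1 s2) t2 ->
     le t2 (m s (m s1 s2)) /\ le (m s (m s1 s2)) t2).
Proof.
  intros [H1 H2].
  assert (A : le (m s (m s1 s2)) (m t1 s2)).
  { apply mg. eapply trans. apply s_le_1. exact H2. eapply trans. apply mr. apply mr. }
  split; [exact A|]. intros t2 [K1 K2]. split; [|eapply trans; eauto].
  assert (B : le t2 (m s s1)) by (eapply trans; [exact K1|]; eapply trans; [apply ml|exact H1]).
  assert (B2 : le t2 s2) by (eapply trans; [exact K1| apply mr]).
  apply mg. eapply trans; [exact B| apply ml].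
  apply mg. eapply trans; [exact B| apply mr]. exact B2.
Qed.

Lemma step_b s s1 s2 t1 : le t1 (m s s2) /\ le (m s s2) t1 ->
  le (m s (m s1 s2)) (m t1 s1) /\
  (forall t2, le t2 (m t1 s1) /\ le (m t1 s1) t2 ->
     le t2 (m s (m s1 s2)) /\ le (m s (m s1 s2)) t2).
Proof.
  intros [H1 H2].
  assert (A : le (m s (m s1 s2)) (m t1 s1)).
  { apply mg. eapply trans. apply s_le_2. exact H2. eapply trans. apply mr. apply ml. }
  split; [exact A|]. intros t2 [K1 K2]. split; [|eapply trans; eauto].
  assert (B : le t2 (m s s2)) by (eapply trans; [exact K1|]; eapply trans; [apply ml|exact H1]).
  assert (B2 : le t2 s1) by (eapply trans; [exact K1| apply mr]).
  apply mg. eapply trans; [exact B| apply ml].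
  apply mg. exact B2. eapply trans; [exact B| apply mr].
Qed.
End Glb.

Lemma DI_wf C models d G s : DI C models d G s -> dom_wf d.
Proof.
  induction 1; auto.
  - unfold dom_wf in *. inversion IHDI; auto.
  - unfold dom_wf in *. inversion IHDI; auto.
Qed.

Theorem mainTheorem7 (C : cstruct)
  (le : forall k : domain, Psi C k -> Psi C k -> Prop)
  (P : forall k : domain, Psi C k -> Prop)
  (models : forall d : domain, (lit -> Prop) -> Psi C (key d) -> Prop)
  (R : forall d : domain, Psi C (key d) -> (lit -> Prop) -> Psi C (key d) -> Prop) :
  preorder_family C le ->
  decent C le P ->
  relates C le P models R ->
  forall (d : domain) (G : list formula) (s' : Psi C (key d)),
    DI C models d G s' ->
    forall (s : Psi C (key d)),
      P (key d) (cmeet C s s') ->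
      forall r : seqz,
        exists (s'' : Psi C (key d)) (pi : SDI C R d s G s''),
          ceq C le (key d) s'' (cmeet C s s') /\ follows pi r.
Proof.
  intros Hpre [D1 [D2 [P1 P2]]] Hrel d G s' HDI.
  induction HDI as [d G s0 Hwf Hctx Hm
                   | d G G' A B s1 s2 Hctx Hperm HA IHA HB IHB
                   | d G G' A B s1 Hctx Hperm H IH
                   | d G G' A X s1 Hctx Hnin Hperm H IH
                   | d G G' A x s1 Hctx Hnin Hperm H IH]; intros s HP r.
  - assert (Hl : forall l, lits G l -> lit_of d l).
    { intros l Hl. apply (Hctx _ Hl). }
    destruct (proj2 (Hrel d Hwf (lits G) Hl s) s0 HP Hm) as [t [Ht HR]].
    exists t, (SDI_ax C R d s G t Hwf Hctx HR). split; [exact Ht| exact I].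
  - pose proof (DI_wf _ _ _ _ _ HA) as Hwf.
    destruct (Hpre d Hwf) as [Rf Tr].
    pose proof (D1 d Hwf) as Gl.
    destruct (seqz_root r) eqn:Er.
    +
      assert (HP2 : P (key d) (cmeet C s s2)).
      { eapply P2; [exact Hwf| exact HP|]. apply (s_le_2 _ _ _ Tr Gl). }
      destruct (IHB s HP2 (seqz_left r)) as [t1 [p1 [Ht1 F1]]].
      destruct (step_b _ _ _ Tr Gl s s1 s2 t1 Ht1) as [Hle Hfin].
      assert (HP3 : P (key d) (cmeet C t1 s1)) by (eapply P2; [exact Hwf| exact HP| exact Hle]).
      destruct (IHA t1 HP3 (seqz_right r)) as [t2 [p2 [Ht2 F2]]].
      exists t2, (SDI_and C R d s G G' A B true t1 t2 Hctx Hperm p1 p2).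
      split; [apply Hfin; exact Ht2|]. simpl. split; [exact F1|]. split; [exact F2|]. right; split; [reflexivity|exact Er].
    + assert (HP2 : P (key d) (cmeet C s s1)).
      { eapply P2; [exact Hwf| exact HP|]. apply (s_le_1 _ _ _ Tr Gl). }
      destruct (IHA s HP2 (seqz_left r)) as [t1 [p1 [Ht1 F1]]].
      destruct (step_w _ _ _ Tr Gl s s1 s2 t1 Ht1) as [Hle Hfin].
      assert (HP3 : P (key d) (cmeet C t1 s2)) by (eapply P2; [exact Hwf| exact HP| exact Hle]).
      destruct (IHB t1 HP3 (seqz_right r)) as [t2 [p2 [Ht2 F2]]].
      exists t2, (SDI_and C R d s G G' A B false t1 t2 Hctx Hperm p1 p2).
      split; [apply Hfin; exact Ht2|]. simpl. split; [exact F1|]. split; [exact F2|]. left; split; [reflexivity|exact Er].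
  - destruct (IH s HP r) as [t [p [Ht F]]].
    exists t, (SDI_or C R d s G G' A B t Hctx Hperm p). simpl. auto.
  - pose proof (DI_wf _ _ _ _ _ H) as Hwf'.
    assert (Hwf : dom_wf d) by (unfold dom_wf in *; inversion Hwf'; auto).
    destruct (Hpre d Hwf) as [Rf Tr].
    destruct (Hpre (DMeta X :: d) Hwf') as [Rf' Tr'].
    assert (HD := D2 d X Hwf Hnin s s1 (cmeet C (lift C s) s1) (conj (Rf' _) (Rf' _))).
    assert (HP' : P (DMeta X :: d) (cmeet C (lift C s) s1)).
    { apply (P1 d X Hwf Hnin). eapply P2; [exact Hwf| exact HP| apply HD]. }
    destruct (IH (lift C s) HP' r) as [t [p [Ht F]]].
    exists (proj C t), (SDI_ex C R d s G G' A X t Hctx Hnin Hperm p).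
    split; [| simpl; exact F].
    apply (D2 d X Hwf Hnin s s1 t Ht).
  - destruct (IH s HP r) as [t [p [Ht F]]].
    exists t, (SDI_all C R d s G G' A x t Hctx Hnin Hperm p). simpl. auto.
Qed.
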